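(* Let $f(z)=\sum_{n=0}^\infty a_n z^n$ and $g(z)=\sum_{n=0}^\infty b_n z^n$ be analytic in $\mathbb{D}$ with $f\prec g$. Then for all $0\le r\le 1/3$, $$\sum_{n=0}^\infty |a_n|r^n+\left(\frac{1}{1+|a_0|}+\frac{r}{1-r}\right)\sum_{n=1}^{\infty}|a_n|^2r^{2n}\le \sum_{n=0}^\infty |b_n|r^n+\left(\frac{1}{1+|a_0|}+\frac{r}{1-r}\right)\sum_{n=1}^{\infty}|b_n|^2r^{2n}.$$
   Context: $\mathbb{D}$ is the open unit disk. $f\prec g$ (subordination) means there is an analytic $\omega:\mathbb{D}\to\mathbb{D}$ with $\omega(0)=0$ and $f=g\circ\omega$ on $\mathbb{D}$. *)

(* Defs.v *)
From Stdlib Require Import Reals.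
From Coquelicot Require Import Coquelicot.
Open Scope R_scope.

Definition analytic_disk_series (f : Complex.C -> Complex.C) (a : nat -> Complex.C) : Prop :=
  forall z : Complex.C, Cmod z < 1 ->
    is_series (fun n : nat => Cmult (a n) (Cpow z n)) (f z).

Definition analytic_disk (f : Complex.C -> Complex.C) : Prop :=
  exists a : nat -> Complex.C, analytic_disk_series f a.

Definition subordinate (f g : Complex.C -> Complex.C) : Prop :=
  exists w : Complex.C -> Complex.C,
    analytic_disk w /\
    (forall z : Complex.C, Cmod z < 1 -> Cmod (w z) < 1) /\
    w (RtoC 0) = RtoC 0 /\
    (forall z : Complex.C, Cmod z < 1 -> f z = g (w z)).

(* Main.v *)
Require Import Defs.
From Stdlib Require Import Reals.
From Coquelicot Require Import Coquelicot.
From Stdlib Require Import Lra Lia Psatz.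
Open Scope R_scope.
Local Notation C := Complex.C.

Fixpoint csum (f : nat -> Complex.C) (n : nat) : Complex.C :=
  match n with O => f O | S k => (csum f k + f (S k))%C end.

Lemma csum_sum_n f n : csum f n = sum_n f n.
Proof.
induction n; simpl. now rewrite sum_O. rewrite sum_Sn, IHn. reflexivity.
Qed.

Lemma csum_re f n : Re (csum f n) = sum_f_R0 (fun k => Re (f k)) n.
Proof. induction n; simpl; auto. unfold Re in *; simpl. now rewrite IHn. Qed.
Lemma csum_im f n : Im (csum f n) = sum_f_R0 (fun k => Im (f k)) n.
Proof. induction n; simpl; auto. unfold Im in *; simpl. now rewrite IHn. Qed.

Lemma is_series_C (a : nat -> Complex.C) (l : C) :
  is_series (fun n => Re (a n)) (Re l) -> is_series (fun n => Im (a n)) (Im l) ->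
  is_series (V := C_NormedModule) a l.
Proof.
intros H1 H2. unfold is_series in *.
apply filterlim_locally. intros eps.
pose proof (proj1 (filterlim_locally _ _) H1 eps) as H1'. clear H1. rename H1' into H1.
pose proof (proj1 (filterlim_locally _ _) H2 eps) as H2'. clear H2. rename H2' into H2.
destruct H1 as [N1 H1]. destruct H2 as [N2 H2]. exists (max N1 N2).
intros n Hn. specialize (H1 n ltac:(lia)). specialize (H2 n ltac:(lia)).
split.
- change (ball (Re l) eps (Re (sum_n a n))). rewrite <- csum_sum_n, csum_re.
  rewrite <- sum_n_Reals. exact H1.
- change (ball (Im l) eps (Im (sum_n a n))). rewrite <- csum_sum_n, csum_im.
  rewrite <- sum_n_Reals. exact H2.
Qed.

Lemma is_series_C_re (a : nat -> Complex.C) (l : C) :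
  is_series (V := C_NormedModule) a l -> is_series (fun n => Re (a n)) (Re l).
Proof.
intros H. unfold is_series in *.
apply filterlim_locally. intros eps.
pose proof (proj1 (filterlim_locally _ _) H eps) as H'. clear H. rename H' into H.
destruct H as [N H]. exists N. intros n Hn. destruct (H n Hn) as [H1 _].
change (ball (Re l) eps (Re (sum_n a n))) in H1.
rewrite <- csum_sum_n, csum_re, <- sum_n_Reals in H1. exact H1.
Qed.

Lemma is_series_C_im (a : nat -> Complex.C) (l : C) :
  is_series (V := C_NormedModule) a l -> is_series (fun n => Im (a n)) (Im l).
Proof.
intros H. unfold is_series in *.
apply filterlim_locally. intros eps.
pose proof (proj1 (filterlim_locally _ _) H eps) as H'. clear H. rename H' into H.
destruct H as [N H]. exists N. intros n Hn. destruct (H n Hn) as [_ H1].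
change (ball (Im l) eps (Im (sum_n a n))) in H1.
rewrite <- csum_sum_n, csum_im, <- sum_n_Reals in H1. exact H1.
Qed.

Lemma Cmod_le_re_im (z : Complex.C) : Cmod z <= Rabs (Re z) + Rabs (Im z).
Proof.
destruct z as [x y]. unfold Cmod, Re, Im; simpl fst; simpl snd.
pose proof (Rabs_pos x); pose proof (Rabs_pos y).
rewrite <- (sqrt_Rsqr (Rabs x + Rabs y)) by lra.
apply sqrt_le_1_alt. unfold Rsqr.
assert (E1 : x ^ 2 = Rabs x * Rabs x) by (rewrite <- Rabs_mult; rewrite Rabs_right; nra).
assert (E2 : y ^ 2 = Rabs y * Rabs y) by (rewrite <- Rabs_mult; rewrite Rabs_right; nra).
rewrite E1, E2. nra.
Qed.


Lemma ball_R (x e y : R) : ball x e y -> Rabs (y - x) < e.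
Proof. unfold ball; simpl; unfold AbsRing_ball, abs, minus, plus, opp; simpl. auto. Qed.

Lemma lim_le (a : nat -> C) (l x : C) (B : R) (M : nat) :
  is_series (V := C_NormedModule) a l ->
  (forall K, (M <= K)%nat -> Cmod (csum a K - x)%C <= B) -> Cmod (l - x)%C <= B.
Proof.
intros H HB. destruct (Rle_or_lt (Cmod (l - x)%C) B) as [h|h]; [exact h|].
exfalso. set (e := (Cmod (l - x)%C - B) / 2).
assert (He : 0 < e) by (unfold e; lra).
pose proof (proj1 (filterlim_locally _ _) H (mkposreal e He)) as H'.
destruct H' as [N HN]. specialize (HN (max M N) ltac:(lia)).
specialize (HB (max M N) ltac:(lia)). rewrite csum_sum_n in HB.
set (s := sum_n a (max M N)) in *.
destruct HN as [H1 H2]. apply ball_R in H1. apply ball_R in H2.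
assert (T : Cmod (l - x)%C <= Cmod (l - s)%C + Cmod (s - x)%C).
{ replace (l - x)%C with ((l - s) + (s - x))%C by ring. apply Cmod_triangle. }
pose proof (Cmod_le_re_im (l - s)%C).
assert (Rabs (Re (l - s)%C) < e).
{ replace (Re (l - s)%C) with (- (fst s - fst l)) by (unfold Re; simpl; ring). rewrite Rabs_Ropp. exact H1. }
assert (Rabs (Im (l - s)%C) < e).
{ replace (Im (l - s)%C) with (- (snd s - snd l)) by (unfold Im; simpl; ring). rewrite Rabs_Ropp. exact H2. }
unfold e in *. lra.
Qed.

Lemma ps_le_Series (a : nat -> R) M :
  (forall n, 0 <= a n) -> ex_series a -> sum_f_R0 a M <= Series a.
Proof.
intros Hp Hex. rewrite <- sum_n_Reals.
apply (is_lim_seq_incr_compare (sum_n a) (Series a)).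
- apply Series_correct. exact Hex.
- intros n. rewrite sum_Sn. specialize (Hp (S n)). unfold plus; simpl. lra.
Qed.

Lemma Series_le_ps (a : nat -> R) B :
  ex_series a -> (forall M, sum_f_R0 a M <= B) -> Series a <= B.
Proof.
intros Hex HB.
assert (H := is_lim_seq_le (sum_n a) (fun _ => B) (Series a) B).
simpl in H. apply H.
- intros n. rewrite sum_n_Reals. apply HB.
- apply Series_correct. exact Hex.
- apply is_lim_seq_const.
Qed.

Lemma le_lim0 (X Y : R) (D : nat -> R) :
  (forall K, X <= Y + D K) -> is_lim_seq D 0 -> X <= Y.
Proof.
intros H HD.
assert (H2 := is_lim_seq_le (fun _ => X) (fun K => Y + D K) X (Y + 0)).
simpl in H2. rewrite Rplus_0_r in H2. apply H2.
- exact H.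
- apply is_lim_seq_const.
- replace (Finite Y) with (Finite (Y + 0)) by (f_equal; ring).
  apply is_lim_seq_plus'. apply is_lim_seq_const. exact HD.
Qed.


Definition PSD (e : nat -> C) (F : C -> C) :=
  forall z : C, Cmod z < 1 -> is_series (V := C_NormedModule) (fun n => (e n * z ^ n)%C) (F z).

Lemma Cmod_RtoC_pow (t : R) n : 0 <= t -> Cmod (RtoC t ^ n)%C = t ^ n.
Proof. intros. rewrite Cmod_pow, Cmod_R, Rabs_right by lra. reflexivity. Qed.

Lemma half_pos : 0 < 1/2. Proof. lra. Qed.

Lemma ps_abs e F : PSD e F -> forall s, 0 <= s < 1 -> ex_series (fun n => Cmod (e n) * s ^ n).
Proof.
intros H s Hs. set (t := (1 + s) / 2).
assert (Ht : 0 < t < 1) by (unfold t; lra).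
assert (Hz : Cmod (RtoC t) < 1) by (rewrite Cmod_R, Rabs_right; lra).
specialize (H _ Hz).
assert (L1 := ex_series_lim_0 _ (ex_intro _ _ (is_series_C_re _ _ H))).
assert (L2 := ex_series_lim_0 _ (ex_intro _ _ (is_series_C_im _ _ H))).
apply is_lim_seq_spec in L1. apply is_lim_seq_spec in L2.
destruct (L1 (mkposreal _ half_pos)) as [N1 H1].
destruct (L2 (mkposreal _ half_pos)) as [N2 H2].
set (N := max N1 N2).
apply (ex_series_incr_n _ N).
apply (ex_series_le (fun k => Cmod (e (N + k)%nat) * s ^ (N + k)) (fun k => (s / t) ^ (N + k))).
- intros k. specialize (H1 (N + k)%nat ltac:(unfold N; lia)). specialize (H2 (N + k)%nat ltac:(unfold N; lia)).
  change (Rabs (Re (e (N+k)%nat * RtoC t ^ (N+k))%C - 0) < 1/2) in H1.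
  change (Rabs (Im (e (N+k)%nat * RtoC t ^ (N+k))%C - 0) < 1/2) in H2.
  rewrite Rminus_0_r in H1, H2.
  pose proof (Cmod_le_re_im (e (N + k)%nat * RtoC t ^ (N + k))%C) as H3.
  rewrite Cmod_mult, Cmod_RtoC_pow in H3 by lra.
  change (norm (Cmod (e (N + k)%nat) * s ^ (N + k))) with (Rabs (Cmod (e (N + k)%nat) * s ^ (N + k))).
  rewrite Rabs_right.
  2:{ apply Rle_ge, Rmult_le_pos. apply Cmod_ge_0. apply pow_le; lra. }
  assert (Hm : Cmod (e (N + k)%nat) * t ^ (N + k) <= 1) by lra.
  unfold Rdiv. rewrite Rpow_mult_distr, pow_inv.
  assert (0 < t ^ (N + k)) by (apply pow_lt; lra).
  assert (0 <= s ^ (N + k)) by (apply pow_le; lra).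
  pose proof (Cmod_ge_0 (e (N + k)%nat)).
  set (T := t ^ (N + k)) in *. set (S := s ^ (N + k)) in *.
  apply (Rmult_le_reg_r T); auto.
  replace (S * / T * T) with S by (field; lra). nra.
- apply (ex_series_incr_n (fun k => (s / t) ^ k) N). apply ex_series_geom.
  rewrite Rabs_right. apply Rmult_lt_reg_r with t. lra. unfold Rdiv. rewrite Rmult_assoc, Rinv_l by lra. unfold t. lra.
  apply Rle_ge, Rmult_le_pos. lra. apply Rlt_le, Rinv_0_lt_compat. lra.
Qed.


Definition om (N : nat) : C := (cos (2 * PI / INR N), sin (2 * PI / INR N)).

Lemma om_pow N k : (om N ^ k)%C = (cos (2 * PI * INR k / INR N), sin (2 * PI * INR k / INR N)).
Proof.
induction k.
- simpl. unfold Rdiv. rewrite !Rmult_0_r, !Rmult_0_l, cos_0, sin_0. reflexivity.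
- rewrite Cpow_S, IHk. unfold om, Cmult; simpl fst; simpl snd.
  replace (2 * PI * INR (S k) / INR N) with (2 * PI / INR N + 2 * PI * INR k / INR N)
    by (rewrite S_INR; unfold Rdiv; ring).
  rewrite cos_plus, sin_plus. f_equal; ring.
Qed.

Lemma Cmod_cs x : Cmod (cos x, sin x) = 1.
Proof.
unfold Cmod; simpl fst; simpl snd. rewrite <- sqrt_1. f_equal.
pose proof (sin2_cos2 x). unfold Rsqr in H. simpl. lra.
Qed.

Lemma Cmod_om_pow N k : Cmod (om N ^ k)%C = 1.
Proof. rewrite om_pow. apply Cmod_cs. Qed.

Lemma om_pow_N N : (0 < N)%nat -> (om N ^ N)%C = 1.
Proof.
intros H. rewrite om_pow.
replace (2 * PI * INR N / INR N) with (2 * PI) by (field; apply not_0_INR; lia).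
rewrite cos_2PI, sin_2PI. reflexivity.
Qed.

Lemma om_neq1 N k : (0 < k < N)%nat -> (om N ^ k)%C <> 1.
Proof.
intros H E. rewrite om_pow in E.
set (x := 2 * PI * INR k / INR N) in E.
assert (Hk : 0 < INR k) by (apply lt_0_INR; lia).
assert (HN : INR k < INR N) by (apply lt_INR; lia).
assert (Hx1 : 0 < x). { unfold x. apply Rdiv_lt_0_compat. pose proof PI_RGT_0. nra. lra. }
assert (Hx2 : x < 2 * PI).
{ unfold x. apply Rmult_lt_reg_r with (INR N). lra. unfold Rdiv. rewrite Rmult_assoc, Rinv_l by lra.
  pose proof PI_RGT_0. nra. }
assert (Hs : sin x = 0) by (apply (f_equal snd) in E; exact E).
assert (Hc : cos x = 1) by (apply (f_equal fst) in E; exact E).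
destruct (sin_eq_O_2PI_0 x ltac:(lra) ltac:(lra) Hs) as [h|[h|h]]; try lra.
rewrite h, cos_PI in Hc. lra.
Qed.

Lemma csum_ext f g n : (forall k, (k <= n)%nat -> f k = g k) -> csum f n = csum g n.
Proof.
induction n; intros H; simpl. apply H; lia. rewrite IHn by (intros; apply H; lia). rewrite H; auto.
Qed.

Lemma geom_tel (q : C) M : ((1 - q) * csum (fun j => q ^ j) M)%C = (1 - q ^ (S M))%C.
Proof.
induction M; simpl. ring. rewrite Cmult_plus_distr_l, IHM. simpl. ring.
Qed.

Lemma geom_zero (q : C) M : (q ^ (S M))%C = 1 -> q <> 1 -> csum (fun j => q ^ j)%C M = 0.
Proof.
intros H1 H2. pose proof (geom_tel q M) as T. rewrite H1 in T.
assert (Hq : (1 - q)%C <> 0) by (intro h; apply H2; apply Ceq_minus in h; auto).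
replace (csum (fun j => q ^ j)%C M) with (/ (1 - q) * ((1 - q) * csum (fun j => q ^ j)%C M))%C
  by (field; auto).
rewrite T. ring.
Qed.

Lemma csum_const (x : C) M : csum (fun _ => x) M = (INR (S M) * x)%C.
Proof.
induction M; simpl csum. simpl. ring. rewrite IHM. rewrite (S_INR (S M)), RtoC_plus. ring.
Qed.

Lemma Cmult_eq_reg_l (a x y : C) : a <> 0 -> (a * x)%C = (a * y)%C -> x = y.
Proof.
intros Ha H. replace x with (/ a * (a * x))%C by (field; auto).
rewrite H. field; auto.
Qed.

Lemma ortho N n m : (n < N)%nat -> (m < N)%nat ->
  csum (fun j => (om N ^ j) ^ n * Cconj ((om N ^ j) ^ m))%C (pred N) =
  if Nat.eqb n m then RtoC (INR N) else 0.
Proof.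
intros Hn Hm.
assert (E : forall j, ((om N ^ j) ^ n * Cconj ((om N ^ j) ^ m))%C = ((om N ^ n * Cconj (om N ^ m)) ^ j)%C).
{ intros j. rewrite Cpow_mult_l, <- !Cpow_mult_r, Cpow_conj, Cpow_conj, <- !Cpow_mult_r.
  rewrite (Nat.mul_comm j n), (Nat.mul_comm j m). reflexivity. }
rewrite (csum_ext _ _ _ (fun j _ => E j)).
assert (Hu : forall k, (om N ^ k * Cconj (om N ^ k))%C = 1).
{ intros k. rewrite <- Cmod2_conj, Cmod_om_pow. simpl. f_equal; ring. }
destruct (Nat.eqb_spec n m) as [<-|Hnm].
- rewrite Hu. rewrite (csum_ext _ (fun _ => 1%C)) by (intros; apply Cpow_1_l).
  rewrite csum_const. replace (S (pred N)) with N by lia. ring.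
- apply geom_zero.
  + replace (S (pred N)) with N by lia.
    rewrite Cpow_mult_l, <- Cpow_conj, <- !Cpow_mult_r, (Nat.mul_comm n N), (Nat.mul_comm m N), !Cpow_mult_r.
    rewrite om_pow_N by lia. rewrite !Cpow_1_l. simpl. unfold Cconj; simpl. 
    apply injective_projections; simpl; ring.
  + intro Hq.
    assert (Hnz : forall k, (om N ^ k)%C <> 0).
    { intros k h. pose proof (Cmod_om_pow N k). rewrite h, Cmod_0 in H. lra. }
    assert (Heq : (om N ^ n)%C = (om N ^ m)%C).
    { replace (om N ^ n)%C with ((om N ^ n * Cconj (om N ^ m)) * om N ^ m)%C.
      rewrite Hq; ring.
      rewrite <- Cmult_assoc, (Cmult_comm (Cconj _)), Hu. ring. }
    destruct (proj1 (Nat.lt_gt_cases n m) Hnm) as [h|h].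
    * apply (om_neq1 N (m - n)); [lia|].
      apply (Cmult_eq_reg_l (om N ^ n)%C); auto.
      rewrite <- Cpow_add_r. replace (n + (m - n))%nat with m by lia. rewrite <- Heq. ring.
    * apply (om_neq1 N (n - m)); [lia|].
      apply (Cmult_eq_reg_l (om N ^ m)%C); auto.
      rewrite <- Cpow_add_r. replace (m + (n - m))%nat with n by lia. rewrite Heq. ring.
Qed.


Lemma RtoC_sum f M : RtoC (sum_f_R0 f M) = csum (fun k => RtoC (f k)) M.
Proof. induction M; simpl; auto. rewrite RtoC_plus, IHM. reflexivity. Qed.

Lemma csum_conj f M : Cconj (csum f M) = csum (fun k => Cconj (f k)) M.
Proof. induction M; simpl; auto. rewrite Cplus_conj, IHM. reflexivity. Qed.

Lemma csum_mult_l a f M : (a * csum f M)%C = csum (fun k => a * f k)%C M.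
Proof. induction M; simpl; auto. rewrite <- IHM. ring. Qed.

Lemma csum_mult_r a f M : (csum f M * a)%C = csum (fun k => f k * a)%C M.
Proof. induction M; simpl; auto. rewrite <- IHM. ring. Qed.

Lemma csum_plus f g M : csum (fun k => f k + g k)%C M = (csum f M + csum g M)%C.
Proof. induction M; simpl; auto. rewrite IHM. ring. Qed.

Lemma csum_switch (u : nat -> nat -> C) m n :
  csum (fun i => csum (u i) n) m = csum (fun j => csum (fun i => u i j) m) n.
Proof.
rewrite !csum_sum_n. rewrite (sum_n_ext (fun i => csum (u i) n) (fun i => sum_n (u i) n))
  by (intros; apply csum_sum_n).
rewrite sum_n_switch. apply sum_n_ext. intros; symmetry; apply csum_sum_n.
Qed.

Lemma csum_delta (x : nat -> C) n M : (n <= M)%nat ->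
  csum (fun m => if Nat.eqb n m then x m else 0%C) M = x n.
Proof.
induction M; intros H.
- simpl. replace n with 0%nat by lia. reflexivity.
- simpl csum. destruct (Nat.eq_dec n (S M)) as [->|h].
  + rewrite Nat.eqb_refl. 
    rewrite (csum_ext _ (fun _ => 0%C)).
    2:{ intros k Hk. destruct (Nat.eqb_spec (S M) k); [lia|auto]. }
    rewrite csum_const. ring.
  + rewrite IHM by lia. destruct (Nat.eqb_spec n (S M)); [lia|]. ring.
Qed.

Lemma DP (u : nat -> C) M :
  sum_f_R0 (fun j => Cmod (csum (fun n => u n * (om (S M) ^ j) ^ n)%C M) ^ 2) M
  = INR (S M) * sum_f_R0 (fun n => Cmod (u n) ^ 2) M.
Proof.
set (w := fun j => (om (S M) ^ j)%C).
apply (f_equal fst) with (x := RtoC _) (y := RtoC _).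
rewrite RtoC_mult, !RtoC_sum.
rewrite (csum_ext _ (fun j => csum (fun n => csum (fun m =>
   (u n * Cconj (u m)) * ((w j) ^ n * Cconj ((w j) ^ m))) M) M)%C).
2:{ intros j _. rewrite Cmod2_conj, csum_conj, csum_mult_r. apply csum_ext. intros n _.
    rewrite csum_mult_l. apply csum_ext. intros m _. rewrite Cmult_conj. fold (w j). ring. }
rewrite csum_switch.
rewrite (csum_ext _ (fun n => csum (fun m => (u n * Cconj (u m)) *
    csum (fun j => (w j) ^ n * Cconj ((w j) ^ m)) M) M)%C).
2:{ intros n _. rewrite csum_switch. apply csum_ext. intros m _. rewrite csum_mult_l. reflexivity. }
rewrite (csum_ext _ (fun n => csum (fun m => if Nat.eqb n m then (u n * Cconj (u m)) * INR (S M) else 0) M)%C).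
2:{ intros n Hn. apply csum_ext. intros m Hm. unfold w. pose proof (ortho (S M) n m ltac:(lia) ltac:(lia)) as O. simpl pred in O. rewrite O.
    destruct (Nat.eqb n m); ring. }
rewrite csum_mult_l. apply csum_ext. intros n Hn.
rewrite (csum_delta (fun m => (u n * Cconj (u m)) * INR (S M))%C) by lia.
rewrite Cmod2_conj. ring.
Qed.


Lemma csum_triangle f K : Cmod (csum f K) <= sum_f_R0 (fun k => Cmod (f k)) K.
Proof.
induction K; simpl. lra. eapply Rle_trans. apply Cmod_triangle. lra.
Qed.

Lemma csum_tail f M K : (M <= K)%nat ->
  Cmod (csum f K - csum f M)%C <= sum_f_R0 (fun k => Cmod (f k)) K - sum_f_R0 (fun k => Cmod (f k)) M.
Proof.
intros H. induction H.
- replace (csum f M - csum f M)%C with (RtoC 0) by ring. rewrite Cmod_0. lra.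
- simpl. replace (csum f m + f (S m) - csum f M)%C with ((csum f m - csum f M) + f (S m))%C by ring.
  eapply Rle_trans. apply Cmod_triangle. lra.
Qed.

Lemma Cmod_rev (a b : C) : Rabs (Cmod a - Cmod b) <= Cmod (a - b)%C.
Proof.
apply Rabs_le. split.
- pose proof (Cmod_triangle (b - a)%C a). replace (b - a + a)%C with b in H by ring.
  replace (b - a)%C with (- (a - b))%C in H by ring. rewrite Cmod_opp in H. lra.
- pose proof (Cmod_triangle (a - b)%C b). replace (a - b + b)%C with a in H by ring. lra.
Qed.

Lemma is_lim_partial (a : nat -> R) : ex_series a -> is_lim_seq (fun M => sum_f_R0 a M) (Series a).
Proof.
intros H. apply Series_correct in H.
apply is_lim_seq_ext with (sum_n a). intros; apply sum_n_Reals. exact H.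
Qed.

Lemma term_le_Series (a : nat -> R) n : (forall k, 0 <= a k) -> ex_series a -> a n <= Series a.
Proof.
intros Hp Hex. eapply Rle_trans. 2: apply (ps_le_Series a n Hp Hex).
destruct n. simpl. lra. simpl. pose proof (cond_pos_sum a n Hp). lra.
Qed.

Lemma ex_series_sq (x : nat -> R) : (forall k, 0 <= x k) -> ex_series x -> ex_series (fun n => (x n) ^ 2).
Proof.
intros Hp Hex.
apply (ex_series_le (fun n => x n ^ 2) (fun n => Series x * x n)).
- intros n. change (norm (x n ^ 2)) with (Rabs (x n ^ 2)). rewrite Rabs_right by (apply Rle_ge; apply pow2_ge_0).
  pose proof (term_le_Series x n Hp Hex). specialize (Hp n). simpl. nra.
- apply (ex_series_scal_l (Series x) x Hex).
Qed.

Definition avgH (H : C -> C) (M : nat) : R :=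
  / INR (S M) * sum_f_R0 (fun j => Cmod (H (om (S M) ^ j)%C) ^ 2) M.

Lemma parseval_lim (e : nat -> C) (r : R) (H : C -> C) :
  0 <= r -> ex_series (fun n => Cmod (e n) * r ^ n) ->
  (forall z, Cmod z = 1 -> is_series (V := C_NormedModule) (fun n => e n * (RtoC r * z) ^ n)%C (H z)) ->
  is_lim_seq (avgH H) (Series (fun n => (Cmod (e n) * r ^ n) ^ 2)).
Proof.
intros Hr Hex HH.
set (x := fun n => Cmod (e n) * r ^ n) in *.
assert (Hxp : forall n, 0 <= x n) by (intros; unfold x; apply Rmult_le_pos; [apply Cmod_ge_0|apply pow_le; lra]).
set (A := Series x).
set (tau := fun M => A - sum_f_R0 x M).
set (P := fun M => sum_f_R0 (fun n => x n ^ 2) M).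
assert (Hterm : forall z n, Cmod z = 1 -> Cmod (e n * (RtoC r * z) ^ n)%C = x n).
{ intros z n Hz. unfold x. rewrite Cmod_mult, Cmod_pow, Cmod_mult, Hz, Cmod_R, Rabs_right by lra. rewrite Rmult_1_r. ring. }
assert (Hsum : forall z K, Cmod z = 1 -> sum_f_R0 (fun k => Cmod (e k * (RtoC r * z) ^ k)%C) K = sum_f_R0 x K).
{ intros z K Hz. induction K; cbn [sum_f_R0]; rewrite ?IHK, Hterm; auto. }
assert (HA : forall M, sum_f_R0 x M <= A) by (intros; apply ps_le_Series; auto).
assert (Hbound : forall M, Rabs (avgH H M - P M) <= 2 * A * tau M).
{ intros M.
  set (T := fun z => csum (fun n => e n * (RtoC r * z) ^ n)%C M).
  assert (HT : forall z, Cmod z = 1 -> Rabs (Cmod (H z) ^ 2 - Cmod (T z) ^ 2) <= 2 * A * tau M).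
  { intros z Hz.
    assert (H1 : Cmod (H z - T z)%C <= tau M).
    { apply (lim_le _ _ _ _ M (HH z Hz)). intros K HK. unfold T.
      eapply Rle_trans. apply csum_tail; auto. cbv beta. rewrite !Hsum by auto. unfold tau. specialize (HA K). lra. }
    assert (H2 : Cmod (H z) <= A).
    { replace (H z) with (H z - 0)%C by ring. apply (lim_le _ _ _ _ 0 (HH z Hz)). intros K _.
      replace (csum _ K - 0)%C with (csum (fun n => e n * (RtoC r * z) ^ n)%C K) by ring.
      eapply Rle_trans. apply csum_triangle. cbv beta. rewrite Hsum by auto. auto. }
    assert (H3 : Cmod (T z) <= A).
    { unfold T. eapply Rle_trans. apply csum_triangle. cbv beta. rewrite Hsum by auto. auto. }
    pose proof (Cmod_rev (H z) (T z)).
    pose proof (Cmod_ge_0 (H z)). pose proof (Cmod_ge_0 (T z)).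
    replace (Cmod (H z) ^ 2 - Cmod (T z) ^ 2) with ((Cmod (H z) - Cmod (T z)) * (Cmod (H z) + Cmod (T z))) by ring.
    rewrite Rabs_mult. rewrite (Rabs_right (Cmod (H z) + Cmod (T z))) by lra.
    assert (0 <= tau M) by (unfold tau; specialize (HA M); lra).
    pose proof (Rabs_pos (Cmod (H z) - Cmod (T z))).
    apply Rle_trans with (tau M * (2 * A)). apply Rmult_le_compat; lra. lra. }
  assert (HD : sum_f_R0 (fun j => Cmod (T (om (S M) ^ j)%C) ^ 2) M = INR (S M) * P M).
  { unfold T, P.
    rewrite (sum_eq (fun n => x n ^ 2) (fun n => Cmod (e n * RtoC r ^ n)%C ^ 2)).
    2:{ intros n _. unfold x. rewrite Cmod_mult, Cmod_pow, Cmod_R, Rabs_right by lra. reflexivity. }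
    rewrite <- (DP (fun n => e n * RtoC r ^ n)%C M).
    apply sum_eq. intros j _. f_equal. f_equal. apply csum_ext. intros n _.
    rewrite Cpow_mult_l. ring. }
  unfold avgH.
  assert (HN : 0 < INR (S M)) by (apply lt_0_INR; lia).
  replace (P M) with (/ INR (S M) * sum_f_R0 (fun j => Cmod (T (om (S M) ^ j)%C) ^ 2) M)
    by (rewrite HD; field; lra).
  rewrite <- Rmult_minus_distr_l, Rabs_mult, Rabs_right by (apply Rle_ge, Rlt_le, Rinv_0_lt_compat; lra).
  apply Rmult_le_reg_l with (INR (S M)); auto.
  rewrite <- Rmult_assoc, Rinv_r, Rmult_1_l by lra.
  rewrite <- minus_sum.
  eapply Rle_trans. apply Rsum_abs.
  eapply Rle_trans. apply sum_Rle. intros j _. apply HT. apply Cmod_om_pow.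
  rewrite sum_cte. lra. }
assert (LP : is_lim_seq P (Series (fun n => x n ^ 2))).
{ apply is_lim_partial. apply ex_series_sq; auto. }
assert (Ltau : is_lim_seq tau 0).
{ replace 0 with (A - A) by ring. apply is_lim_seq_minus'. apply is_lim_seq_const. apply is_lim_partial; auto. }
assert (L1 : is_lim_seq (fun M => P M - 2 * A * tau M) (Series (fun n => x n ^ 2) - 2 * A * 0)).
{ apply is_lim_seq_minus'; auto. apply is_lim_seq_mult'; auto. apply is_lim_seq_const. }
assert (L2 : is_lim_seq (fun M => P M + 2 * A * tau M) (Series (fun n => x n ^ 2) + 2 * A * 0)).
{ apply is_lim_seq_plus'; auto. apply is_lim_seq_mult'; auto. apply is_lim_seq_const. }
rewrite Rmult_0_r, Rminus_0_r in L1. rewrite Rmult_0_r, Rplus_0_r in L2.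
change (Series (fun n => (Cmod (e n) * r ^ n) ^ 2)) with (Series (fun n => x n ^ 2)).
apply (is_lim_seq_le_le _ _ _ _ (fun M => proj1 (Rabs_le_between' _ _ _) (Hbound M)) L1 L2).
Qed.


Lemma CMP (e1 e2 : nat -> C) (H1 H2 : C -> C) (r K : R) :
  0 <= r -> 0 <= K ->
  ex_series (fun n => Cmod (e1 n) * r ^ n) -> ex_series (fun n => Cmod (e2 n) * r ^ n) ->
  (forall z, Cmod z = 1 -> is_series (V := C_NormedModule) (fun n => e1 n * (RtoC r * z) ^ n)%C (H1 z)) ->
  (forall z, Cmod z = 1 -> is_series (V := C_NormedModule) (fun n => e2 n * (RtoC r * z) ^ n)%C (H2 z)) ->
  (forall z, Cmod z = 1 -> Cmod (H1 z) <= K * Cmod (H2 z)) ->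
  Series (fun n => (Cmod (e1 n) * r ^ n) ^ 2) <= K ^ 2 * Series (fun n => (Cmod (e2 n) * r ^ n) ^ 2).
Proof.
intros Hr HK E1 E2 S1 S2 Hle.
pose proof (parseval_lim e1 r H1 Hr E1 S1) as L1.
pose proof (parseval_lim e2 r H2 Hr E2 S2) as L2.
assert (L3 := is_lim_seq_mult' (fun _ => K ^ 2) (avgH H2) (K ^ 2) _ (is_lim_seq_const _) L2).
assert (Hn : forall M, avgH H1 M <= K ^ 2 * avgH H2 M).
{ intros M. unfold avgH.
  assert (0 < / INR (S M)) by (apply Rinv_0_lt_compat, lt_0_INR; lia).
  rewrite <- Rmult_assoc, (Rmult_comm (K ^ 2)), Rmult_assoc.
  apply Rmult_le_compat_l. lra.
  rewrite scal_sum. apply sum_Rle. intros j _.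
  pose proof (Hle _ (Cmod_om_pow (S M) j)). pose proof (Cmod_ge_0 (H1 (om (S M) ^ j)%C)).
  pose proof (Cmod_ge_0 (H2 (om (S M) ^ j)%C)). 
  replace (Cmod (H2 (om (S M) ^ j)%C) ^ 2 * K ^ 2) with ((K * Cmod (H2 (om (S M) ^ j)%C)) ^ 2) by ring.
  apply pow_incr. lra. }
exact (is_lim_seq_le _ _ _ _ Hn L1 L3).
Qed.

Lemma CMP_D (e1 e2 : nat -> C) (F1 F2 : C -> C) (r K : R) :
  PSD e1 F1 -> PSD e2 F2 -> 0 <= r < 1 -> 0 <= K ->
  (forall z, Cmod z = r -> Cmod (F1 z) <= K * Cmod (F2 z)) ->
  Series (fun n => (Cmod (e1 n) * r ^ n) ^ 2) <= K ^ 2 * Series (fun n => (Cmod (e2 n) * r ^ n) ^ 2).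
Proof.
intros P1 P2 Hr HK Hle.
assert (Hz : forall z, Cmod z = 1 -> Cmod (RtoC r * z)%C = r).
{ intros z Hz. rewrite Cmod_mult, Hz, Cmod_R, Rabs_right by lra. ring. }
apply (CMP e1 e2 (fun z => F1 (RtoC r * z)%C) (fun z => F2 (RtoC r * z)%C) r K); try lra.
- apply (ps_abs e1 F1 P1). lra.
- apply (ps_abs e2 F2 P2). lra.
- intros z Hz1. apply P1. rewrite Hz; lra.
- intros z Hz1. apply P2. rewrite Hz; lra.
- intros z Hz1. apply Hle. auto.
Qed.

Lemma coef_le_Series (e : nat -> C) F r k : PSD e F -> 0 <= r < 1 ->
  (Cmod (e k) * r ^ k) ^ 2 <= Series (fun n => (Cmod (e n) * r ^ n) ^ 2).
Proof.
intros P Hr.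
assert (Hp : forall n, 0 <= Cmod (e n) * r ^ n) by (intros; apply Rmult_le_pos; [apply Cmod_ge_0|apply pow_le; lra]).
apply (term_le_Series (fun n => (Cmod (e n) * r ^ n) ^ 2)).
- intros n. apply pow2_ge_0.
- apply ex_series_sq; auto. apply (ps_abs e F P). lra.
Qed.


Definition conv (p q : nat -> C) (n : nat) : C := csum (fun i => p i * q (n - i)%nat)%C n.

Lemma is_series_Rminus (a b : nat -> R) la lb : is_series a la -> is_series b lb ->
  is_series (fun n => a n - b n) (la - lb).
Proof. intros. apply (is_series_minus a b la lb); auto. Qed.

Lemma is_series_Rplus (a b : nat -> R) la lb : is_series a la -> is_series b lb ->
  is_series (fun n => a n + b n) (la + lb).
Proof. intros. apply (is_series_plus a b la lb); auto. Qed.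

Lemma conv_z (p q : nat -> C) z n :
  (conv p q n * z ^ n)%C = csum (fun i => (p i * z ^ i) * (q (n - i)%nat * z ^ (n - i)))%C n.
Proof.
unfold conv. rewrite csum_mult_r. apply csum_ext. intros i Hi.
replace (z ^ n)%C with (z ^ i * z ^ (n - i))%C. ring.
rewrite <- Cpow_add_r. f_equal. lia.
Qed.

Lemma im_le_Cmod (c : C) : Rabs (Im c) <= Cmod c.
Proof.
pose proof (re_le_Cmod (c * Ci)%C). rewrite Cmod_mult, Cmod_Ci, Rmult_1_r in H.
replace (Re (c * Ci)%C) with (- Im c) in H by (destruct c; unfold Re, Im; simpl; ring).
rewrite Rabs_Ropp in H. exact H.
Qed.

Lemma abs_re_ex (a : nat -> C) (b : nat -> R) : ex_series b -> (forall n, Cmod (a n) <= b n) ->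
  ex_series (fun n => Rabs (Re (a n))) /\ ex_series (fun n => Rabs (Im (a n))).
Proof.
intros Hb H. split.
- apply (@ex_series_le R_AbsRing R_CompleteNormedModule _ b); auto. intros n. change (norm (Rabs (Re (a n)))) with (Rabs (Rabs (Re (a n)))).
  rewrite Rabs_Rabsolu. eapply Rle_trans. apply re_le_Cmod. auto.
- apply (@ex_series_le R_AbsRing R_CompleteNormedModule _ b); auto. intros n. change (norm (Rabs (Im (a n)))) with (Rabs (Rabs (Im (a n)))).
  rewrite Rabs_Rabsolu. eapply Rle_trans. apply im_le_Cmod. auto.
Qed.

Lemma CP (p q : nat -> C) (P Q z : C) :
  is_series (V := C_NormedModule) (fun n => p n * z ^ n)%C P ->
  is_series (V := C_NormedModule) (fun n => q n * z ^ n)%C Q ->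
  ex_series (fun n => Cmod (p n) * Cmod z ^ n) -> ex_series (fun n => Cmod (q n) * Cmod z ^ n) ->
  is_series (V := C_NormedModule) (fun n => conv p q n * z ^ n)%C (P * Q)%C.
Proof.
intros HP HQ AP AQ.
set (pa := fun n => (p n * z ^ n)%C). set (qa := fun n => (q n * z ^ n)%C).
assert (BP : forall n, Cmod (pa n) <= Cmod (p n) * Cmod z ^ n) by (intros; unfold pa; rewrite Cmod_mult, Cmod_pow; lra).
assert (BQ : forall n, Cmod (qa n) <= Cmod (q n) * Cmod z ^ n) by (intros; unfold qa; rewrite Cmod_mult, Cmod_pow; lra).
destruct (abs_re_ex pa _ AP BP) as [PR PI].
destruct (abs_re_ex qa _ AQ BQ) as [QR QI].
pose proof (is_series_C_re _ _ HP) as HPR. pose proof (is_series_C_im _ _ HP) as HPI.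
pose proof (is_series_C_re _ _ HQ) as HQR. pose proof (is_series_C_im _ _ HQ) as HQI.
fold pa in HPR, HPI. fold qa in HQR, HQI.
pose proof (is_series_mult _ _ _ _ HPR HQR PR QR) as M1.
pose proof (is_series_mult _ _ _ _ HPI HQI PI QI) as M2.
pose proof (is_series_mult _ _ _ _ HPR HQI PR QI) as M3.
pose proof (is_series_mult _ _ _ _ HPI HQR PI QR) as M4.
apply is_series_C.
- eapply is_series_ext. 2: apply (is_series_Rminus _ _ _ _ M1 M2).
  intros n. cbv beta. rewrite conv_z, csum_re. rewrite <- minus_sum. apply sum_eq. intros i _.
  fold (pa i). fold (qa (n - i)%nat). unfold Re; simpl. ring.
- eapply is_series_ext. 2: apply (is_series_Rplus _ _ _ _ M3 M4).
  intros n. cbv beta. rewrite conv_z, csum_im. rewrite <- plus_sum. apply sum_eq. intros i _.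
  fold (pa i). fold (qa (n - i)%nat). unfold Im; simpl. ring.
Qed.

Lemma MJ (p q : nat -> C) (s : R) : 0 <= s ->
  ex_series (fun n => Cmod (p n) * s ^ n) -> ex_series (fun n => Cmod (q n) * s ^ n) ->
  ex_series (fun n => Cmod (conv p q n) * s ^ n) /\
  Series (fun n => Cmod (conv p q n) * s ^ n) <=
    Series (fun n => Cmod (p n) * s ^ n) * Series (fun n => Cmod (q n) * s ^ n).
Proof.
intros Hs Ep Eq.
set (a := fun n => Cmod (p n) * s ^ n). set (b := fun n => Cmod (q n) * s ^ n).
assert (Ha : forall n, 0 <= a n) by (intros; unfold a; apply Rmult_le_pos; [apply Cmod_ge_0|apply pow_le; lra]).
assert (Hb : forall n, 0 <= b n) by (intros; unfold b; apply Rmult_le_pos; [apply Cmod_ge_0|apply pow_le; lra]).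
pose proof (is_series_mult_pos a b _ _ (Series_correct _ Ep) (Series_correct _ Eq) Ha Hb) as M.
assert (Hle : forall n, 0 <= Cmod (conv p q n) * s ^ n <= sum_f_R0 (fun k => a k * b (n - k)%nat) n).
{ intros n. split. apply Rmult_le_pos; [apply Cmod_ge_0|apply pow_le; lra].
  unfold conv. eapply Rle_trans. apply Rmult_le_compat_r. apply pow_le; lra. apply csum_triangle.
  rewrite Rmult_comm, scal_sum. apply sum_Rle. intros i Hi. unfold a, b.
  rewrite Cmod_mult. replace (s ^ n) with (s ^ i * s ^ (n - i)).
  apply Req_le; ring. rewrite <- pow_add. f_equal. lia. }
assert (Ex : ex_series (fun n => Cmod (conv p q n) * s ^ n)).
{ apply (@ex_series_le R_AbsRing R_CompleteNormedModule _ (fun n => sum_f_R0 (fun k => a k * b (n - k)%nat) n)).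
  intros n. change (norm (Cmod (conv p q n) * s ^ n)) with (Rabs (Cmod (conv p q n) * s ^ n)).
  rewrite Rabs_right by (apply Rle_ge; apply Hle). apply Hle.
  eexists; exact M. }
split; auto.
apply Rle_trans with (Series (fun n => sum_f_R0 (fun k => a k * b (n - k)%nat) n)). apply Series_le; auto. eexists; exact M. rewrite (is_series_unique _ _ M). apply Rle_refl.
Qed.


Lemma fin_series {K : AbsRing} {V : NormedModule K} (a : nat -> V) M :
  (forall m, (M < m)%nat -> a m = zero) -> is_series a (sum_n a M).
Proof.
intros H. unfold is_series. apply filterlim_locally. intros eps. exists M. intros N HN.
replace (sum_n a N) with (sum_n a M). apply ball_center.
induction HN. auto. rewrite sum_Sn, H by lia. rewrite plus_zero_r. auto.
Qed.

Lemma fin_series_C (a : nat -> C) M :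
  (forall m, (M < m)%nat -> a m = RtoC 0) -> is_series (V := C_NormedModule) a (csum a M).
Proof. intros H. rewrite csum_sum_n. apply (@fin_series C_AbsRing C_NormedModule a M). exact H. Qed.

Lemma fin_series_R (a : nat -> R) M :
  (forall m, (M < m)%nat -> a m = 0) -> is_series a (sum_f_R0 a M).
Proof. intros H. rewrite <- sum_n_Reals. apply (@fin_series R_AbsRing R_NormedModule a M). exact H. Qed.

Lemma sum_zero_R (a : nat -> R) N : (forall m, (m <= N)%nat -> a m = 0) -> sum_f_R0 a N = 0.
Proof. induction N; intros H; simpl. apply H; lia. rewrite IHN. rewrite H by lia. ring. intros; apply H; lia. Qed.

Lemma delta_series_R k (v : R) : is_series (fun m => if Nat.eqb m k then v else 0) v.
Proof.
assert (E : sum_f_R0 (fun m => if Nat.eqb m k then v else 0) k = v).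
{ destruct k. simpl. auto. simpl. rewrite sum_zero_R. rewrite Nat.eqb_refl. ring.
  intros m Hm. destruct (Nat.eqb_spec m (S k)); [lia|auto]. }
pose proof (fin_series_R (fun m => if Nat.eqb m k then v else 0) k) as H.
rewrite E in H. apply H. intros m Hm. destruct (Nat.eqb_spec m k); [lia|auto].
Qed.

Lemma sum_ge_term (f : nat -> R) k N : (forall m, 0 <= f m) -> (k <= N)%nat -> f k <= sum_f_R0 f N.
Proof.
intros Hp H. induction H. destruct k; simpl. lra. pose proof (cond_pos_sum f k Hp). lra.
simpl. specialize (Hp (S m)). lra.
Qed.

Lemma csum_zero (a : nat -> C) N : (forall m, (m <= N)%nat -> a m = RtoC 0) -> csum a N = RtoC 0.
Proof. induction N; intros H; simpl. apply H; lia. rewrite IHN. rewrite H by lia. ring. intros; apply H; lia. Qed.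

Lemma shift_series (c : nat -> C) (z L : C) n :
  is_series (V := C_NormedModule) (fun m => c m * z ^ m)%C L ->
  is_series (V := C_NormedModule) (fun m => if Nat.leb n m then c (m - n)%nat * z ^ m else RtoC 0)%C (z ^ n * L)%C.
Proof.
intros H. destruct n.
- simpl. rewrite Cmult_1_l. eapply is_series_ext. 2: exact H.
  intros m. simpl. rewrite Nat.sub_0_r. reflexivity.
- apply (is_series_decr_n _ (S n)). lia.
  rewrite <- csum_sum_n. simpl pred. rewrite csum_zero.
  2:{ intros m Hm. destruct (Nat.leb_spec (S n) m); [lia|auto]. }
  match goal with |- is_series _ ?v => replace v with (scal (z ^ S n)%C L) end.
  2:{ change (scal (z ^ S n)%C L) with (z ^ S n * L)%C. 
      match goal with |- _ = plus ?a (opp ?b) => change (plus a (opp b)) with (a + - b)%C end. refine ((fun a : C => _ : a = (a + - RtoC 0)%C) _). ring. }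
  eapply is_series_ext. 2: apply (is_series_scal (z ^ S n)%C _ _ H).
  intros k. change (scal (z ^ S n)%C (c k * z ^ k)%C) with ((z ^ S n) * (c k * z ^ k))%C.
  destruct (Nat.leb_spec (S n) (S n + k)); [|lia].
  replace (S n + k - S n)%nat with k by lia. rewrite Cpow_add_r. rewrite Cmult_assoc, (Cmult_comm (z ^ S n)%C (c k)), <- Cmult_assoc. reflexivity.
Qed.



Lemma is_series_extC (a b : nat -> C) (l : C) : (forall n, a n = b n) ->
  is_series (V := C_NormedModule) a l -> is_series (V := C_NormedModule) b l.
Proof. apply is_series_ext. Qed.

Lemma is_series_extR (a b : nat -> R) (l : R) : (forall n, a n = b n) ->
  is_series a l -> is_series b l.
Proof. apply is_series_ext. Qed.

Lemma is_series_plusC (a b : nat -> C) (la lb : C) :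
  is_series (V := C_NormedModule) a la -> is_series (V := C_NormedModule) b lb ->
  is_series (V := C_NormedModule) (fun n => a n + b n)%C (la + lb)%C.
Proof. intros. apply (is_series_plus a b la lb); auto. Qed.

Lemma is_series_scalC (x : C) (a : nat -> C) (la : C) :
  is_series (V := C_NormedModule) a la ->
  is_series (V := C_NormedModule) (fun n => x * a n)%C (x * la)%C.
Proof. intros. apply (is_series_scal x a la); auto. Qed.

Lemma bern (t : R) (m : nat) : 0 <= t <= 1 -> 1 - INR m * t <= (1 - t) ^ m.
Proof.
intros Ht. induction m. simpl. lra. rewrite S_INR. simpl.
assert (h1 : (1 - t) * (1 - INR m * t) <= (1 - t) * (1 - t) ^ m) by (apply Rmult_le_compat_l; lra).
assert (0 <= INR m) by apply pos_INR. nra.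
Qed.

Lemma pow_le_1 (x : R) (k : nat) : 0 <= x <= 1 -> x ^ k <= 1.
Proof. intros H. induction k; simpl. lra. assert (0 <= x ^ k) by (apply pow_le; lra). nra. Qed.

Lemma limit_rho (X Y : R) (m : nat) : 0 <= X -> 0 <= Y ->
  (forall rho, 0 <= rho < 1 -> X * rho ^ m <= Y) -> X <= Y.
Proof.
intros HX HY H. destruct (Rle_or_lt X Y) as [h|h]; auto. exfalso.
assert (Hm : 0 <= INR m) by apply pos_INR.
set (t := (X - Y) / (2 * (X * (INR m + 1) + 1))).
assert (Hd : 0 < 2 * (X * (INR m + 1) + 1)) by nra.
assert (Ht0 : 0 < t) by (unfold t; apply Rdiv_lt_0_compat; lra).
assert (Ht1 : t <= 1 / 2).
{ unfold t. apply Rmult_le_reg_r with (2 * (X * (INR m + 1) + 1)); auto.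
  unfold Rdiv. rewrite Rmult_assoc, Rinv_l by lra. nra. }
assert (Hxt : X * INR m * t < X - Y).
{ assert (X * INR m * t <= X * (INR m + 1) * t) by nra.
  assert (X * (INR m + 1) * t < X - Y).
  { unfold t. apply Rmult_lt_reg_r with (2 * (X * (INR m + 1) + 1)); auto.
    unfold Rdiv. replace (X * (INR m + 1) * ((X - Y) * / (2 * (X * (INR m + 1) + 1))) * (2 * (X * (INR m + 1) + 1)))
      with (X * (INR m + 1) * (X - Y)) by (field; lra). nra. }
  lra. }
specialize (H (1 - t) ltac:(lra)).
pose proof (bern t m ltac:(lra)). nra.
Qed.

Lemma wiener_raw (c : nat -> C) (W : C -> C) (n : nat) (x0 x1 : C) :
  PSD c W -> (forall z, Cmod z < 1 -> Cmod (W z) < 1) -> c 0%nat = RtoC 0 -> (1 <= n)%nat ->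
  Cmod (x0 * c 1%nat)%C ^ 2 + Cmod (x0 * c (S n) + x1 * c 1%nat)%C ^ 2 <= Cmod x0 ^ 2 + Cmod x1 ^ 2.
Proof.
intros Hc HW Hc0 Hn.
set (e := fun m => (x0 * c m + (if Nat.leb n m then x1 * c (m - n)%nat else RtoC 0))%C).
set (F := fun z => (x0 * W z + x1 * (z ^ n * W z))%C).
assert (PE : PSD e F).
{ intros z Hz. apply (is_series_extC (fun m => x0 * (c m * z ^ m) + x1 * (if Nat.leb n m then c (m - n)%nat * z ^ m else RtoC 0))%C).
  - intros m. unfold e. destruct (Nat.leb n m); ring.
  - apply is_series_plusC. apply is_series_scalC. apply Hc; auto.
    apply is_series_scalC. apply shift_series. apply Hc; auto. }
set (pc := fun m => ((if Nat.eqb 0 m then x0 else RtoC 0) + (if Nat.eqb n m then x1 else RtoC 0))%C).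
set (G := fun z => (x0 + x1 * z ^ n)%C).
assert (PG : PSD pc G).
{ intros z Hz.
  assert (E : csum (fun m => pc m * z ^ m)%C n = G z).
  { rewrite (csum_ext _ (fun m => (if Nat.eqb 0 m then x0 * z ^ m else RtoC 0) + (if Nat.eqb n m then x1 * z ^ m else RtoC 0))%C).
    2:{ intros m _. unfold pc. destruct (Nat.eqb 0 m), (Nat.eqb n m); ring. }
    rewrite csum_plus, (csum_delta (fun m => x0 * z ^ m)%C), (csum_delta (fun m => x1 * z ^ m)%C) by lia.
    unfold G. simpl. ring. }
  rewrite <- E. apply fin_series_C. intros m Hm. unfold pc.
  destruct (Nat.eqb_spec 0 m); [lia|]. destruct (Nat.eqb_spec n m); [lia|]. ring. }
set (X := Cmod (x0 * c 1%nat)%C ^ 2 + Cmod (x0 * c (S n) + x1 * c 1%nat)%C ^ 2).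
apply (limit_rho X _ (2 * S n)).
- unfold X. pose proof (pow2_ge_0 (Cmod (x0 * c 1%nat)%C)). pose proof (pow2_ge_0 (Cmod (x0 * c (S n) + x1 * c 1%nat)%C)). lra.
- pose proof (pow2_ge_0 (Cmod x0)). pose proof (pow2_ge_0 (Cmod x1)). lra.
- intros rho Hr.
  pose proof (CMP_D e pc F G rho 1 PE PG Hr ltac:(lra)) as Hcmp.
  assert (Hcmp' : Series (fun m => (Cmod (e m) * rho ^ m) ^ 2) <= Series (fun m => (Cmod (pc m) * rho ^ m) ^ 2)).
  { rewrite <- (Rmult_1_l (Series (fun m => (Cmod (pc m) * rho ^ m) ^ 2))).
    replace 1 with (1 ^ 2) at 1 by ring. apply Hcmp.
    intros z Hz. unfold F, G.
    replace (x0 * W z + x1 * (z ^ n * W z))%C with (W z * (x0 + x1 * z ^ n))%C by ring.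
    rewrite Cmod_mult. pose proof (HW z ltac:(lra)). pose proof (Cmod_ge_0 (x0 + x1 * z ^ n)%C). nra. }
  clear Hcmp.
  assert (Hs : Series (fun m => (Cmod (pc m) * rho ^ m) ^ 2) = Cmod x0 ^ 2 + (Cmod x1 * rho ^ n) ^ 2).
  { apply is_series_unique.
    eapply is_series_extR. 2: apply (is_series_Rplus _ _ _ _ (delta_series_R 0 (Cmod x0 ^ 2)) (delta_series_R n ((Cmod x1 * rho ^ n) ^ 2))).
    intros m. cbv beta. unfold pc.
    destruct (Nat.eq_dec m 0) as [->|h0]; [|destruct (Nat.eq_dec m n) as [->|h1]].
    + rewrite Nat.eqb_refl. rewrite (proj2 (Nat.eqb_neq 0 n)) by lia. rewrite (proj2 (Nat.eqb_neq n 0)) by lia.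
      rewrite Cplus_0_r. simpl. ring.
    + rewrite (proj2 (Nat.eqb_neq n 0)) by lia. rewrite (proj2 (Nat.eqb_neq 0 n)) by lia. rewrite Nat.eqb_refl. rewrite Cplus_0_l. ring.
    + rewrite (proj2 (Nat.eqb_neq m 0)) by lia. rewrite (proj2 (Nat.eqb_neq 0 m)) by lia.
      rewrite (proj2 (Nat.eqb_neq m n)) by lia. rewrite (proj2 (Nat.eqb_neq n m)) by lia.
      rewrite Cplus_0_l, Cmod_0. ring. }
  assert (Hlow : (Cmod (e 1%nat) * rho) ^ 2 + (Cmod (e (S n)) * rho ^ S n) ^ 2 <= Series (fun m => (Cmod (e m) * rho ^ m) ^ 2)).
  { assert (Hp : forall m, 0 <= (Cmod (e m) * rho ^ m) ^ 2) by (intros; apply pow2_ge_0).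
    eapply Rle_trans. 2: apply (ps_le_Series _ (S n) Hp).
    2:{ apply ex_series_sq. intros; apply Rmult_le_pos; [apply Cmod_ge_0|apply pow_le; lra].
        apply (ps_abs e F PE). lra. }
    simpl sum_f_R0 at 1. pose proof (sum_ge_term _ 1 n Hp Hn). simpl in H. simpl. lra. }
  assert (E1 : e 1%nat = (x0 * c 1%nat)%C).
  { unfold e. destruct (Nat.leb_spec n 1). replace (1 - n)%nat with 0%nat by lia. rewrite Hc0. ring. ring. }
  assert (E2 : e (S n) = (x0 * c (S n) + x1 * c 1%nat)%C).
  { unfold e. destruct (Nat.leb_spec n (S n)); [|lia]. replace (S n - n)%nat with 1%nat by lia. reflexivity. }
  rewrite E1, E2 in Hlow. rewrite Hs in Hcmp'.
  assert (Hr2 : rho ^ (2 * S n) <= rho ^ 2).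
  { replace (2 * S n)%nat with (2 + 2 * n)%nat by lia. rewrite pow_add.
    assert (0 <= rho ^ 2) by apply pow2_ge_0. assert (rho ^ (2 * n) <= 1) by (apply pow_le_1; lra). nra. }
  assert (Hr3 : rho ^ (2 * S n) <= (rho ^ S n) ^ 2) by (rewrite <- pow_mult; rewrite Nat.mul_comm; lra).
  assert (Hrn : (Cmod x1 * rho ^ n) ^ 2 <= Cmod x1 ^ 2).
  { rewrite Rpow_mult_distr. assert (0 <= rho ^ n <= 1) by (split; [apply pow_le|apply pow_le_1]; lra).
    pose proof (pow2_ge_0 (Cmod x1)). assert ((rho ^ n) ^ 2 <= 1) by nra. nra. }
  unfold X. rewrite !Rpow_mult_distr in Hlow.
  pose proof (pow2_ge_0 (Cmod (x0 * c 1%nat)%C)). pose proof (pow2_ge_0 (Cmod (x0 * c (S n) + x1 * c 1%nat)%C)).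
  nra.
Qed.

Lemma wiener (c : nat -> C) (W : C -> C) :
  PSD c W -> (forall z, Cmod z < 1 -> Cmod (W z) < 1) -> c 0%nat = RtoC 0 ->
  Cmod (c 1%nat) <= 1 /\ forall n, (1 <= n)%nat -> Cmod (c (S n)) <= 1 - Cmod (c 1%nat) ^ 2.
Proof.
intros Hc HW Hc0.
assert (Ha : forall n, (1 <= n)%nat -> Cmod (c 1%nat) ^ 2 + Cmod (c (S n)) ^ 2 <= 1).
{ intros n Hn. pose proof (wiener_raw c W n (RtoC 1) (RtoC 0) Hc HW Hc0 Hn) as H.
  rewrite !Cmult_1_l, Cmult_0_l, Cplus_0_r, Cmod_1, Cmod_0 in H. lra. }
pose proof (Ha 1%nat (le_n 1)) as H1.
pose proof (Cmod_ge_0 (c 1%nat)). pose proof (pow2_ge_0 (Cmod (c 2%nat))).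
split. nra.
intros n Hn. specialize (Ha n Hn).
set (a := Cmod (c 1%nat)) in *. set (b := Cmod (c (S n))) in *.
set (d := 1 - a ^ 2).
pose proof (wiener_raw c W n (RtoC d) (Cconj (c 1%nat) * c (S n))%C Hc HW Hc0 Hn) as HW2.
replace (RtoC d * c (S n) + Cconj (c 1%nat) * c (S n) * c 1%nat)%C with (c (S n)) in HW2.
2:{ replace (Cconj (c 1%nat) * c (S n) * c 1%nat)%C with (c (S n) * (c 1%nat * Cconj (c 1%nat)))%C by ring.
    rewrite <- Cmod2_conj. fold a. unfold d. rewrite RtoC_minus, RtoC_pow. ring. }
rewrite !Cmod_mult, Cmod_conj, Cmod_R in HW2. fold a b in HW2.
assert (Hd : 0 <= d) by (unfold d; nra).
rewrite Rabs_right in HW2 by lra.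
assert (Hb : 0 <= b) by apply Cmod_ge_0.
assert (HH : (b ^ 2 - d ^ 2) * d <= 0).
{ replace ((b ^ 2 - d ^ 2) * d) with ((b ^ 2 - d ^ 2) * (1 - a ^ 2)) by (unfold d; ring). nra. }
destruct (Rle_or_lt d 0) as [h|h].
- assert (d = 0) by lra. assert (b ^ 2 <= 0) by (unfold d in *; nra). nra.
- assert (b ^ 2 <= d ^ 2) by (apply (Rmult_le_reg_r d); nra). nra.
Qed.

Lemma bohr (c : nat -> C) (W : C -> C) (r : R) :
  PSD c W -> (forall z, Cmod z < 1 -> Cmod (W z) < 1) -> c 0%nat = RtoC 0 -> 0 <= r <= 1/3 ->
  Series (fun n => Cmod (c n) * r ^ n) <= r.
Proof.
intros Hc HW Hc0 Hr.
destruct (wiener c W Hc HW Hc0) as [H1 H2].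
set (a := Cmod (c 1%nat)) in *. set (d := 1 - a ^ 2).
assert (Ex : ex_series (fun n => Cmod (c n) * r ^ n)) by (apply (ps_abs c W Hc); lra).
rewrite (Series_incr_n _ 2) by (auto; lia). simpl pred. simpl sum_f_R0. rewrite Hc0, Cmod_0.
assert (Hg : Series (fun k => d * r ^ 2 * r ^ k) = d * r ^ 2 / (1 - r)).
{ rewrite Series_scal_l, Series_geom. field. lra. rewrite Rabs_right; lra. }
assert (Hle : Series (fun k => Cmod (c (2 + k)%nat) * r ^ (2 + k)) <= d * r ^ 2 / (1 - r)).
{ rewrite <- Hg. apply Series_le.
  - intros k. split. apply Rmult_le_pos. apply Cmod_ge_0. apply pow_le; lra.
    rewrite pow_add. replace (2 + k)%nat with (S (S k)) by lia.
    specialize (H2 (S k) ltac:(lia)). fold a d in H2.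
    assert (0 <= r ^ 2 * r ^ k) by (apply Rmult_le_pos; apply pow_le; lra).
    replace (d * r ^ 2 * r ^ k) with (d * (r ^ 2 * r ^ k)) by ring. apply Rmult_le_compat_r; auto.
  - apply (ex_series_scal_l (d * r ^ 2) (fun k => r ^ k)). apply ex_series_geom. rewrite Rabs_right; lra. }
assert (Ha0 : 0 <= a) by apply Cmod_ge_0.
assert (Hd : 0 <= d) by (unfold d; nra).
assert (Hq : d * r ^ 2 / (1 - r) <= d * r / 2).
{ assert (Hq1 : r * / (1 - r) <= 1 / 2).
  { apply Rmult_le_reg_r with (1 - r). lra. rewrite Rmult_assoc, Rinv_l by lra. lra. }
  assert (0 <= r * / (1 - r)) by (apply Rmult_le_pos; [lra|apply Rlt_le, Rinv_0_lt_compat; lra]).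
  replace (d * r ^ 2 / (1 - r)) with (d * r * (r * / (1 - r))) by (field; lra).
  assert (0 <= d * r) by nra. nra. }
cbn [pow]. fold a. assert (0 <= r * (1 - a) ^ 2) by (apply Rmult_le_pos; [lra|apply pow2_ge_0]). unfold d in *. nra.
Qed.


Fixpoint pw (c : nat -> C) (k : nat) : nat -> C :=
  match k with
  | O => fun n => if Nat.eqb n 0 then RtoC 1 else RtoC 0
  | S k' => conv c (pw c k')
  end.

Lemma pw_series c W : PSD c W -> forall k, PSD (pw c k) (fun z => W z ^ k)%C.
Proof.
intros Hc k. induction k; intros z Hz.
- assert (E : csum (fun n => pw c 0 n * z ^ n)%C 0 = (W z ^ 0)%C) by (simpl; ring).
  rewrite <- E. apply fin_series_C. intros m Hm. simpl. destruct (Nat.eqb_spec m 0); [lia|]. ring.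
- simpl pw. rewrite Cpow_S. apply CP.
  + apply Hc; auto.
  + apply IHk; auto.
  + apply (ps_abs c W Hc). split; [apply Cmod_ge_0|auto].
  + apply (ps_abs _ _ IHk). split; [apply Cmod_ge_0|auto].
Qed.

Lemma pw_maj c W s : PSD c W -> 0 <= s < 1 -> forall k,
  Series (fun n => Cmod (pw c k n) * s ^ n) <= Series (fun n => Cmod (c n) * s ^ n) ^ k.
Proof.
intros Hc Hs k. induction k.
- simpl. apply Req_le. apply is_series_unique.
  eapply is_series_extR. 2: apply (delta_series_R 0 1).
  intros n. destruct (Nat.eqb_spec n 0) as [->|h]. simpl. rewrite Cmod_1, Rmult_1_l. reflexivity. simpl. destruct (Nat.eqb_spec n 0); [lia|]. rewrite Cmod_0, Rmult_0_l. reflexivity.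
- simpl pw. destruct (MJ c (pw c k) s ltac:(lra) (ps_abs c W Hc s Hs) (ps_abs _ _ (pw_series c W Hc k) s Hs)) as [_ H].
  eapply Rle_trans. apply H. simpl.
  assert (0 <= Series (fun n => Cmod (c n) * s ^ n)).
  { eapply Rle_trans. 2: apply (term_le_Series _ 0). apply Rmult_le_pos. apply Cmod_ge_0. apply pow_le; lra.
    intros; apply Rmult_le_pos. apply Cmod_ge_0. apply pow_le; lra. apply (ps_abs c W Hc s Hs). }
  apply Rmult_le_compat_l; auto.
Qed.

Definition eK (c b : nat -> C) (K : nat) (n : nat) : C := csum (fun k => b k * pw c k n)%C K.

Lemma eK_series c W b K : PSD c W -> PSD (eK c b K) (fun z => csum (fun k => b k * W z ^ k)%C K).
Proof.
intros Hc. induction K; intros z Hz.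
- apply (is_series_extC (fun n => b 0%nat * (pw c 0 n * z ^ n))%C).
  intros n. unfold eK. cbn [pw csum]. ring.
  simpl. apply is_series_scalC. apply (pw_series c W Hc 0); auto.
- apply (is_series_extC (fun n => eK c b K n * z ^ n + b (S K) * (pw c (S K) n * z ^ n))%C).
  intros n. unfold eK. cbn [pw csum]. ring.
  simpl csum. apply is_series_plusC. apply IHK; auto. apply is_series_scalC. apply (pw_series c W Hc (S K)); auto.
Qed.

Lemma csum_shift (f : nat -> C) K : csum f (S K) = (f 0%nat + csum (fun k => f (S k)) K)%C.
Proof. induction K. simpl. ring. simpl csum in *. rewrite IHK. ring. Qed.

Lemma eK_rec c b K n :
  eK c b (S K) n = (b 0%nat * pw c 0 n + conv c (eK c (fun k => b (S k)) K) n)%C.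
Proof.
unfold eK. rewrite csum_shift. f_equal. symmetry. unfold conv.
rewrite (csum_ext _ (fun i => csum (fun k => c i * (b (S k) * pw c k (n - i)%nat)) K)%C n).
2:{ intros i _. apply csum_mult_l. }
rewrite csum_switch. apply csum_ext. intros k _. cbn [pw]. unfold conv. rewrite csum_mult_l. apply csum_ext. intros i _. ring.
Qed.

Lemma sum_switch_R (u : nat -> nat -> R) m n :
  sum_f_R0 (fun i => sum_f_R0 (u i) n) m = sum_f_R0 (fun j => sum_f_R0 (fun i => u i j) m) n.
Proof.
rewrite <- !sum_n_Reals.
rewrite (sum_n_ext (fun i => sum_f_R0 (u i) n) (fun i => sum_n (u i) n)) by (intros; rewrite sum_n_Reals; auto).
rewrite sum_n_switch. apply sum_n_ext. intros; rewrite sum_n_Reals; auto.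
Qed.

Lemma sum_mult_l (a : R) (f : nat -> R) M : sum_f_R0 (fun i => a * f i) M = a * sum_f_R0 f M.
Proof. induction M; simpl. ring. rewrite IHM. ring. Qed.

Lemma eK_abs c W b K M r : PSD c W -> (forall z, Cmod z < 1 -> Cmod (W z) < 1) -> c 0%nat = RtoC 0 ->
  0 <= r <= 1/3 ->
  sum_f_R0 (fun n => Cmod (eK c b K n) * r ^ n) M <= sum_f_R0 (fun k => Cmod (b k) * r ^ k) K.
Proof.
intros Hc HW Hc0 Hr.
assert (Hpr : forall n, 0 <= r ^ n) by (intros; apply pow_le; lra).
eapply Rle_trans.
{ apply sum_Rle. intros n _. apply Rmult_le_compat_r. auto. unfold eK. eapply Rle_trans. apply csum_triangle.
  apply Req_le. reflexivity. }
rewrite (sum_eq _ (fun n => sum_f_R0 (fun k => Cmod (b k) * (Cmod (pw c k n) * r ^ n)) K)).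
2:{ intros n _. rewrite Rmult_comm, scal_sum. apply sum_eq. intros k _. rewrite Cmod_mult. ring. }
rewrite sum_switch_R. apply sum_Rle. intros k _.
rewrite sum_mult_l. apply Rmult_le_compat_l. apply Cmod_ge_0.
assert (Hs : 0 <= r < 1) by lra.
eapply Rle_trans. apply ps_le_Series.
intros; apply Rmult_le_pos; [apply Cmod_ge_0|auto].
apply (ps_abs _ _ (pw_series c W Hc k) r Hs).
eapply Rle_trans. apply (pw_maj c W r Hc Hs k).
apply pow_incr. split.
- eapply Rle_trans. 2: apply (term_le_Series _ 0). apply Rmult_le_pos. apply Cmod_ge_0. auto.
  intros; apply Rmult_le_pos; [apply Cmod_ge_0|auto]. apply (ps_abs c W Hc r Hs).
- apply (bohr c W r Hc HW Hc0 Hr).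
Qed.


Lemma sum_cmod_pow (b : nat -> C) (w : C) K :
  sum_f_R0 (fun k => Cmod (b k * w ^ k)%C) K = sum_f_R0 (fun k => Cmod (b k) * Cmod w ^ k) K.
Proof. apply sum_eq. intros. rewrite Cmod_mult, Cmod_pow. reflexivity. Qed.

Lemma W_bound c W z : PSD c W -> (forall z, Cmod z < 1 -> Cmod (W z) < 1) -> c 0%nat = RtoC 0 ->
  Cmod z <= 1/3 -> Cmod (W z) <= Cmod z.
Proof.
intros Hc HW Hc0 Hz.
pose proof (Cmod_ge_0 z).
replace (W z) with (W z - RtoC 0)%C by ring.
apply (lim_le _ _ _ _ 0 (Hc z ltac:(lra))). intros K _.
replace (csum (fun n => c n * z ^ n)%C K - RtoC 0)%C with (csum (fun n => c n * z ^ n)%C K) by ring.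
eapply Rle_trans. apply csum_triangle. cbv beta. rewrite sum_cmod_pow.
eapply Rle_trans. apply ps_le_Series.
intros; apply Rmult_le_pos; [apply Cmod_ge_0|apply pow_le; auto].
apply (ps_abs c W Hc). lra.
apply (bohr c W (Cmod z) Hc HW Hc0). lra.
Qed.

Lemma sum_diff_le (f g : nat -> R) K K' : (K <= K')%nat -> (forall k, f k <= g k) ->
  sum_f_R0 f K' - sum_f_R0 f K <= sum_f_R0 g K' - sum_f_R0 g K.
Proof.
intros H Hfg. induction H. lra. simpl. specialize (Hfg (S m)). lra.
Qed.

Lemma is_series_minusC (a b : nat -> C) (la lb : C) :
  is_series (V := C_NormedModule) a la -> is_series (V := C_NormedModule) b lb ->
  is_series (V := C_NormedModule) (fun n => a n - b n)%C (la - lb)%C.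
Proof. intros. apply (is_series_minus a b la lb); auto. Qed.

Definition tau (b : nat -> C) (K : nat) : R :=
  Series (fun k => Cmod (b k) * (1/3) ^ k) - sum_f_R0 (fun k => Cmod (b k) * (1/3) ^ k) K.

Lemma coef_conv a b c f g W K n :
  PSD a f -> PSD b g -> PSD c W -> (forall z, Cmod z < 1 -> Cmod (W z) < 1) -> c 0%nat = RtoC 0 ->
  (forall z, Cmod z < 1 -> f z = g (W z)) ->
  Cmod (a n - eK c b K n)%C * (1/3) ^ n <= tau b K.
Proof.
intros Hf Hg Hc HW Hc0 Hfg.
assert (Ht0 : 0 <= tau b K).
{ unfold tau. assert (sum_f_R0 (fun k => Cmod (b k) * (1 / 3) ^ k) K <= Series (fun k => Cmod (b k) * (1 / 3) ^ k)); [|lra].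
  apply ps_le_Series. intros; apply Rmult_le_pos; [apply Cmod_ge_0|apply pow_le; lra].
  apply (ps_abs b g Hg). lra. }
set (t := tau b K) in *.
set (e1 := fun n => (a n - eK c b K n)%C).
set (F1 := fun z => (f z - csum (fun k => b k * W z ^ k) K)%C).
assert (P1 : PSD e1 F1).
{ intros z Hz. apply (is_series_extC (fun n => a n * z ^ n - eK c b K n * z ^ n)%C).
  intros m. unfold e1. ring.
  apply is_series_minusC. apply Hf; auto. apply (eK_series c W b K Hc); auto. }
set (e2 := fun n => if Nat.eqb n 0 then RtoC t else RtoC 0).
assert (P2 : PSD e2 (fun _ => RtoC t)).
{ intros z Hz. assert (E : csum (fun n => e2 n * z ^ n)%C 0 = RtoC t) by (unfold e2; simpl; ring).
  pose proof (fin_series_C (fun n => e2 n * z ^ n)%C 0) as HH. rewrite E in HH. apply HH.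
  intros m Hm. unfold e2. destruct (Nat.eqb_spec m 0); [lia|]. ring. }
pose proof (CMP_D e1 e2 F1 (fun _ => RtoC t) (1/3) 1 P1 P2 ltac:(lra) ltac:(lra)) as H.
assert (Hs : Series (fun n => (Cmod (e2 n) * (1/3) ^ n) ^ 2) = t ^ 2).
{ apply is_series_unique. eapply is_series_extR. 2: apply (delta_series_R 0 (t ^ 2)).
  intros m. unfold e2. destruct (Nat.eqb_spec m 0) as [->|h]. simpl. rewrite Cmod_R, Rabs_right by lra. ring.
  rewrite Cmod_0, Rmult_0_l. simpl. ring. }
rewrite Hs in H.
assert (H' : Series (fun n => (Cmod (e1 n) * (1/3) ^ n) ^ 2) <= t ^ 2).
{ replace (t ^ 2) with (1 ^ 2 * t ^ 2) by ring. apply H.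
  intros z Hz. unfold F1. rewrite Hfg by lra. rewrite Rmult_1_l, Cmod_R, Rabs_right by lra.
  pose proof (W_bound c W z Hc HW Hc0 ltac:(lra)) as Wb.
  apply (lim_le _ _ _ _ K (Hg (W z) ltac:(lra))). intros K' HK'.
  eapply Rle_trans. apply csum_tail; auto. cbv beta. rewrite !sum_cmod_pow.
  eapply Rle_trans. apply sum_diff_le with (g := fun k => Cmod (b k) * (1/3) ^ k); auto.
  intros k. apply Rmult_le_compat_l. apply Cmod_ge_0. apply pow_incr. split; [apply Cmod_ge_0|lra].
  unfold t, tau.
  assert (sum_f_R0 (fun k => Cmod (b k) * (1 / 3) ^ k) K' <= Series (fun k => Cmod (b k) * (1 / 3) ^ k)); [|lra].
  apply ps_le_Series. intros; apply Rmult_le_pos; [apply Cmod_ge_0|apply pow_le; lra].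
  apply (ps_abs b g Hg). lra. }
pose proof (coef_le_Series e1 F1 (1/3) n P1 ltac:(lra)) as Hn.
assert (0 <= Cmod (e1 n) * (1/3) ^ n) by (apply Rmult_le_pos; [apply Cmod_ge_0|apply pow_le; lra]).
fold (e1 n). nra.
Qed.


Lemma ex_sq_PSD e F r : PSD e F -> 0 <= r < 1 -> ex_series (fun n => (Cmod (e n) * r ^ n) ^ 2).
Proof.
intros P Hr. apply ex_series_sq. intros; apply Rmult_le_pos; [apply Cmod_ge_0|apply pow_le; lra].
apply (ps_abs e F P). lra.
Qed.

Lemma conv_PSD c W h H : PSD c W -> PSD h H -> PSD (conv c h) (fun z => W z * H z)%C.
Proof.
intros Hc Hh z Hz. apply CP. apply Hc; auto. apply Hh; auto.
apply (ps_abs c W Hc). split; [apply Cmod_ge_0|auto].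
apply (ps_abs h H Hh). split; [apply Cmod_ge_0|auto].
Qed.

Lemma littlewood c W r : PSD c W -> (forall z, Cmod z < 1 -> Cmod (W z) < 1) -> c 0%nat = RtoC 0 ->
  0 <= r <= 1/3 -> forall K b,
  Series (fun n => (Cmod (eK c b K n) * r ^ n) ^ 2) <= sum_f_R0 (fun k => (Cmod (b k) * r ^ k) ^ 2) K.
Proof.
intros Hc HW Hc0 Hr K. assert (Hr1 : 0 <= r < 1) by lra.
induction K; intros b.
- simpl sum_f_R0. apply Req_le. apply is_series_unique.
  eapply is_series_extR. 2: apply (delta_series_R 0 ((Cmod (b 0%nat) * r ^ 0) ^ 2)).
  intros n. unfold eK. cbn [csum pw]. destruct (Nat.eqb_spec n 0) as [->|h].
  + simpl. rewrite Cmult_1_r. reflexivity.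
  + rewrite Cmult_0_r, Cmod_0, Rmult_0_l. simpl. ring.
- set (h := eK c (fun k => b (S k)) K).
  set (Hh := fun z => csum (fun k => b (S k) * W z ^ k)%C K).
  assert (Ph : PSD h Hh) by (apply eK_series; auto).
  assert (Pc := conv_PSD c W h Hh Hc Ph).
  assert (Pe := eK_series c W b (S K) Hc).
  rewrite (Series_incr_1 _ (ex_sq_PSD _ _ r Pe Hr1)).
  assert (E0 : eK c b (S K) 0 = b 0%nat).
  { rewrite eK_rec. unfold conv. cbn [csum pw]. simpl Nat.eqb. rewrite Hc0. ring. }
  rewrite E0.
  rewrite (Series_ext (fun k => (Cmod (eK c b (S K) (S k)) * r ^ S k) ^ 2) (fun k => (Cmod (conv c h (S k)) * r ^ S k) ^ 2)).
  2:{ intros k. rewrite eK_rec. cbn [pw]. simpl Nat.eqb. rewrite Cmult_0_r, Cplus_0_l. reflexivity. }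
  assert (Ec : Series (fun n => (Cmod (conv c h n) * r ^ n) ^ 2) = Series (fun k => (Cmod (conv c h (S k)) * r ^ S k) ^ 2)).
  { rewrite (Series_incr_1 _ (ex_sq_PSD _ _ r Pc Hr1)). unfold conv at 1. cbn [csum]. rewrite Hc0, Cmult_0_l, Cmod_0. simpl. ring. }
  rewrite <- Ec.
  assert (Hcmp : Series (fun n => (Cmod (conv c h n) * r ^ n) ^ 2) <= r ^ 2 * Series (fun n => (Cmod (h n) * r ^ n) ^ 2)).
  { apply (CMP_D _ _ _ _ r r Pc Ph Hr1 ltac:(lra)).
    intros z Hz. rewrite Cmod_mult. apply Rmult_le_compat_r. apply Cmod_ge_0.
    rewrite <- Hz. apply (W_bound c W z Hc HW Hc0). lra. }
  specialize (IHK (fun k => b (S k))). fold h in IHK.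
  rewrite decomp_sum by lia. simpl pred.
  rewrite (sum_eq (fun i => (Cmod (b (S i)) * r ^ S i) ^ 2) (fun i => r ^ 2 * (Cmod (b (S i)) * r ^ i) ^ 2)).
  2:{ intros i _. simpl. ring. }
  rewrite sum_mult_l. simpl pow at 3.
  assert (0 <= r ^ 2) by apply pow2_ge_0.
  assert (r ^ 2 * Series (fun n => (Cmod (h n) * r ^ n) ^ 2) <= r ^ 2 * sum_f_R0 (fun k => (Cmod (b (S k)) * r ^ k) ^ 2) K)
    by (apply Rmult_le_compat_l; auto).
  simpl. simpl in Hcmp. simpl in H0. lra.
Qed.


Lemma coef0 e F : PSD e F -> e 0%nat = F (RtoC 0).
Proof.
intros P. pose proof (P (RtoC 0) ltac:(rewrite Cmod_0; lra)) as H.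
assert (Cmod (F (RtoC 0) - e 0%nat)%C <= 0).
{ apply (lim_le _ _ _ _ 0 H). intros K _.
  replace (csum (fun n => e n * RtoC 0 ^ n)%C K) with (e 0%nat).
  replace (e 0%nat - e 0%nat)%C with (RtoC 0) by ring. rewrite Cmod_0. lra.
  induction K. simpl. ring. simpl csum. rewrite <- IHK. simpl. ring. }
pose proof (Cmod_ge_0 (F (RtoC 0) - e 0%nat)%C).
assert (Cmod (F (RtoC 0) - e 0%nat)%C = 0) by lra. apply Cmod_eq_0 in H2.
apply Ceq_minus in H2. auto.
Qed.

Lemma tau_lim b g : PSD b g -> is_lim_seq (tau b) 0.
Proof.
intros Hg. unfold tau. set (S := Series (fun k => Cmod (b k) * (1 / 3) ^ k)).
replace 0 with (S - S) by ring. apply is_lim_seq_minus'. apply is_lim_seq_const.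
apply is_lim_partial. apply (ps_abs b g Hg). lra.
Qed.

Lemma tau_ge0 b g K : PSD b g -> 0 <= tau b K.
Proof.
intros Hg. unfold tau.
assert (sum_f_R0 (fun k => Cmod (b k) * (1 / 3) ^ k) K <= Series (fun k => Cmod (b k) * (1 / 3) ^ k)); [|lra].
apply ps_le_Series. intros; apply Rmult_le_pos; [apply Cmod_ge_0|apply pow_le; lra].
apply (ps_abs b g Hg). lra.
Qed.

Lemma coef_bound a b c f g W K n r :
  PSD a f -> PSD b g -> PSD c W -> (forall z, Cmod z < 1 -> Cmod (W z) < 1) -> c 0%nat = RtoC 0 ->
  (forall z, Cmod z < 1 -> f z = g (W z)) -> 0 <= r <= 1/3 ->
  Cmod (a n) * r ^ n <= Cmod (eK c b K n) * r ^ n + tau b K.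
Proof.
intros Hf Hg Hc HW Hc0 Hfg Hr.
pose proof (coef_conv a b c f g W K n Hf Hg Hc HW Hc0 Hfg).
assert (Cmod (a n) <= Cmod (eK c b K n) + Cmod (a n - eK c b K n)%C).
{ replace (a n) with (eK c b K n + (a n - eK c b K n))%C at 1 by ring. apply Cmod_triangle. }
assert (r ^ n <= (1/3) ^ n) by (apply pow_incr; lra).
assert (0 <= r ^ n) by (apply pow_le; lra).
pose proof (Cmod_ge_0 (a n - eK c b K n)%C).
nra.
Qed.

Lemma targetA a b c f g W r :
  PSD a f -> PSD b g -> PSD c W -> (forall z, Cmod z < 1 -> Cmod (W z) < 1) -> c 0%nat = RtoC 0 ->
  (forall z, Cmod z < 1 -> f z = g (W z)) -> 0 <= r <= 1/3 ->
  Series (fun n => Cmod (a n) * r ^ n) <= Series (fun n => Cmod (b n) * r ^ n).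
Proof.
intros Hf Hg Hc HW Hc0 Hfg Hr.
apply Series_le_ps. apply (ps_abs a f Hf). lra.
intros M.
apply (le_lim0 _ _ (fun K => INR (S M) * tau b K)).
2:{ replace 0 with (INR (S M) * 0) by ring. apply is_lim_seq_mult'. apply is_lim_seq_const. apply (tau_lim b g Hg). }
intros K.
eapply Rle_trans. apply sum_Rle. intros n _. apply (coef_bound a b c f g W K n r); auto.
rewrite plus_sum, sum_cte.
assert (sum_f_R0 (fun n => Cmod (eK c b K n) * r ^ n) M <= Series (fun n => Cmod (b n) * r ^ n)).
{ eapply Rle_trans. apply (eK_abs c W b K M r Hc HW Hc0 Hr).
  apply ps_le_Series. intros; apply Rmult_le_pos; [apply Cmod_ge_0|apply pow_le; lra]. apply (ps_abs b g Hg). lra. }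
lra.
Qed.

Lemma targetB a b c f g W r :
  PSD a f -> PSD b g -> PSD c W -> (forall z, Cmod z < 1 -> Cmod (W z) < 1) -> c 0%nat = RtoC 0 ->
  (forall z, Cmod z < 1 -> f z = g (W z)) -> 0 <= r <= 1/3 ->
  Series (fun n => (Cmod (a n) * r ^ n) ^ 2) <= Series (fun n => (Cmod (b n) * r ^ n) ^ 2).
Proof.
intros Hf Hg Hc HW Hc0 Hfg Hr. assert (Hr1 : 0 <= r < 1) by lra.
set (B1 := Series (fun n => Cmod (b n) * r ^ n)).
apply Series_le_ps. apply (ex_sq_PSD a f r Hf Hr1).
intros M.
apply (le_lim0 _ _ (fun K => INR (S M) * (2 * tau b K * B1 + tau b K * tau b K))).
2:{ replace 0 with (INR (S M) * (2 * 0 * B1 + 0 * 0)) by ring. apply is_lim_seq_mult'. apply is_lim_seq_const.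
    apply is_lim_seq_plus'. apply is_lim_seq_mult'. apply is_lim_seq_mult'. apply is_lim_seq_const. apply (tau_lim b g Hg).
    apply is_lim_seq_const. apply is_lim_seq_mult'; apply (tau_lim b g Hg). }
intros K.
assert (Hp : forall n, 0 <= Cmod (eK c b K n) * r ^ n) by (intros; apply Rmult_le_pos; [apply Cmod_ge_0|apply pow_le; lra]).
assert (HB1 : forall n, Cmod (eK c b K n) * r ^ n <= B1).
{ intros n. eapply Rle_trans. apply (sum_ge_term _ n n Hp). lia.
  eapply Rle_trans. apply (eK_abs c W b K n r Hc HW Hc0 Hr).
  apply ps_le_Series. intros; apply Rmult_le_pos; [apply Cmod_ge_0|apply pow_le; lra]. apply (ps_abs b g Hg). lra. }
pose proof (tau_ge0 b g K Hg) as Ht.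
eapply Rle_trans. apply sum_Rle. intros n _.
{ pose proof (coef_bound a b c f g W K n r Hf Hg Hc HW Hc0 Hfg Hr) as H1.
  assert (0 <= Cmod (a n) * r ^ n) by (apply Rmult_le_pos; [apply Cmod_ge_0|apply pow_le; lra]).
  specialize (HB1 n). specialize (Hp n).
  assert ((Cmod (a n) * r ^ n) ^ 2 <= (Cmod (eK c b K n) * r ^ n) ^ 2 + (2 * tau b K * B1 + tau b K * tau b K)).
  { assert ((Cmod (a n) * r ^ n) ^ 2 <= (Cmod (eK c b K n) * r ^ n + tau b K) ^ 2) by (apply pow_incr; lra).
    nra. }
  exact H0. }
rewrite plus_sum, sum_cte.
assert (sum_f_R0 (fun n => (Cmod (eK c b K n) * r ^ n) ^ 2) M <= Series (fun n => (Cmod (b n) * r ^ n) ^ 2)).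
{ eapply Rle_trans. apply ps_le_Series. intros; apply pow2_ge_0.
  apply (ex_sq_PSD _ _ r (eK_series c W b K Hc) Hr1).
  eapply Rle_trans. apply (littlewood c W r Hc HW Hc0 Hr K b).
  apply ps_le_Series. intros; apply pow2_ge_0. apply (ex_sq_PSD b g r Hg Hr1). }
lra.
Qed.

Theorem lemma2 (f g : Complex.C -> Complex.C) (a b : nat -> Complex.C)
  (Hf : analytic_disk_series f a) (Hg : analytic_disk_series g b)
  (Hsub : subordinate f g) (r : R) (Hr0 : 0 <= r) (Hr1 : r <= 1 / 3) :
  Series (fun n => Cmod (a n) * r ^ n)
    + (1 / (1 + Cmod (a 0%nat)) + r / (1 - r))
      * Series (fun n => (Cmod (a (S n))) ^ 2 * r ^ (2 * S n))
  <= Series (fun n => Cmod (b n) * r ^ n)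
    + (1 / (1 + Cmod (a 0%nat)) + r / (1 - r))
      * Series (fun n => (Cmod (b (S n))) ^ 2 * r ^ (2 * S n)).
Proof.
destruct Hsub as [W [[c Hc] [HW [HW0 Hfg]]]].
change (PSD a f) in Hf. change (PSD b g) in Hg. change (PSD c W) in Hc.
assert (Hc0 : c 0%nat = RtoC 0) by (rewrite (coef0 c W Hc); exact HW0).
assert (Hab : a 0%nat = b 0%nat).
{ rewrite (coef0 a f Hf), (coef0 b g Hg), Hfg. rewrite HW0. reflexivity. rewrite Cmod_0. lra. }
assert (Hr : 0 <= r <= 1/3) by lra. assert (Hr' : 0 <= r < 1) by lra.
pose proof (targetA a b c f g W r Hf Hg Hc HW Hc0 Hfg Hr) as HA.
pose proof (targetB a b c f g W r Hf Hg Hc HW Hc0 Hfg Hr) as HB.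
assert (Esq : forall e : nat -> C, Series (fun n => Cmod (e (S n)) ^ 2 * r ^ (2 * S n)) = Series (fun n => (Cmod (e (S n)) * r ^ (S n)) ^ 2)).
{ intros e. apply Series_ext. intros n. rewrite Rpow_mult_distr, <- pow_mult, Nat.mul_comm. reflexivity. }
rewrite !Esq.
rewrite (Series_incr_1 _ (ex_sq_PSD a f r Hf Hr')) in HB.
rewrite (Series_incr_1 _ (ex_sq_PSD b g r Hg Hr')) in HB.
rewrite Hab in HB.
set (lam := 1 / (1 + Cmod (a 0%nat)) + r / (1 - r)).
assert (Hl : 0 <= lam).
{ unfold lam. pose proof (Cmod_ge_0 (a 0%nat)).
  assert (0 <= 1 / (1 + Cmod (a 0%nat))) by (apply Rlt_le, Rdiv_lt_0_compat; lra).
  assert (0 <= r / (1 - r)) by (apply Rmult_le_pos; [lra|apply Rlt_le, Rinv_0_lt_compat; lra]). lra. }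
assert (HB' : Series (fun n => (Cmod (a (S n)) * r ^ S n) ^ 2) <= Series (fun n => (Cmod (b (S n)) * r ^ S n) ^ 2)) by lra.
apply Rplus_le_compat; auto. apply Rmult_le_compat_l; auto.
Qed.
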